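(* Let $S^{(i)}_{n,k}$ be as defined (weights $a_j=1$, $n\ge2$, $1\le i\le n$). Convergence is in distribution. (1) For fixed $n\ge2$ and $k\to\infty$: $S^{(i)}_{n,k}/k\to\mathrm{Beta}(1,n-1)$. (2) For $n,k\to\infty$ with $k/n\to\infty$: $\frac nk S^{(i)}_{n,k}\to\mathrm{Exp}(1)$. (3) For $n,k\to\infty$ with $k/n\to c>0$: $S^{(i)}_{n,k}\to G$, where $\mathbb P\{G=0\}=\frac1{1+c}+\frac{c}{(1+c)^2}$ and $\mathbb P\{G=j\}=\frac{c^{j+1}}{(1+c)^{j+2}}$ for $j\ge1$. (4) For $n\to\infty$ with $k/n\to0$: $S^{(i)}_{n,k}\to0$.
   Context: For $\vec\ell=(\ell_1,\dots,\ell_k)$ with $n\ge\ell_1\ge\cdots\ge\ell_k\ge1$ and $1\le i\le n$ let $\sigma^{(i)}(\vec\ell)=|\{1\le j\le k-1:\ell_j=\ell_{j+1}=i\}|$. $S^{(i)}_{n,k}=\sigma^{(i)}(\vec\ell)$ for $\vec\ell$ uniformly random among the $\binom{n+k-1}{k}$ such sequences. $\mathrm{Beta}(1,n-1)$ has density $(n-1)(1-x)^{n-2}$ on $[0,1]$; $\mathrm{Exp}(1)$ has density $e^{-x}$ on $[0,\infty)$. *)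

(* Defs.v *)
From Stdlib Require Import Reals Lra Lia ZArith Arith List Bool.
Import ListNotations.
Open Scope R_scope.

Fixpoint all_lists (n k : nat) : list (list nat) :=
  match k with
  | O => [ [] ]
  | S k' => flat_map (fun a => map (cons a) (all_lists n k')) (seq 1 n)
  end.

Fixpoint nonincb (l : list nat) : bool :=
  match l with
  | a :: ((b :: _) as t) => andb (Nat.leb b a) (nonincb t)
  | _ => true
  end.

(* The sample space: sequences n >= l_1 >= ... >= l_k >= 1. *)
Definition adm (n k : nat) : list (list nat) := filter nonincb (all_lists n k).

Fixpoint sigma (i : nat) (l : list nat) : nat :=
  match l with
  | a :: ((b :: _) as t) =>
      ((if andb (Nat.eqb a i) (Nat.eqb b i) then 1 else 0) + sigma i t)%nat
  | _ => O
  end.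

(* P{ g(S^{(i)}_{n,k}) <= x } for l uniform on adm n k. *)
Definition cdfS (n k i : nat) (g : nat -> R) (x : R) : R :=
  INR (length (filter (fun l => if Rle_dec (g (sigma i l)) x then true else false)
                      (adm n k)))
  / INR (length (adm n k)).

(* CDF of Beta(1, n-1) (density (n-1)(1-x)^(n-2) on [0,1]). *)
Definition beta1_cdf (n : nat) (x : R) : R :=
  if Rlt_dec x 0 then 0
  else if Rle_dec x 1 then 1 - (1 - x) ^ (n - 1) else 1.

Definition exp1_cdf (x : R) : R :=
  if Rlt_dec x 0 then 0 else 1 - exp (- x).

Definition G_pmf (c : R) (j : nat) : R :=
  match j with
  | O => 1 / (1 + c) + c / (1 + c) ^ 2
  | S _ => c ^ (j + 1) / (1 + c) ^ (j + 2)
  end.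

Definition G_cdf (c x : R) : R :=
  if Rlt_dec x 0 then 0 else sum_f_R0 (G_pmf c) (Z.to_nat (Int_part x)).

Definition delta0_cdf (x : R) : R := if Rlt_dec x 0 then 0 else 1.

(* Main.v *)
Require Import Defs.
From Stdlib Require Import Reals List.
Open Scope R_scope.
From Stdlib Require Import Reals Lra Lia ZArith Arith List Bool.
Import ListNotations.
Open Scope R_scope.

Fixpoint gen (n k : nat) : list (list nat) :=
  match k with
  | O => [ [] ]
  | S k' => flat_map (fun a => map (cons a) (gen a k')) (seq 1 n)
  end.

Definition headle (a : nat) (t : list nat) : bool :=
  match t with [] => true | b :: _ => Nat.leb b a end.

Lemma filter_flat_map {A B} (p : B -> bool) (f : A -> list B) l :
  filter p (flat_map f l) = flat_map (fun x => filter p (f x)) l.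
Proof. induction l; simpl; auto. rewrite filter_app, IHl; auto. Qed.

Lemma filter_map_cons (p : list nat -> bool) a (l : list (list nat)) :
  filter p (map (cons a) l) = map (cons a) (filter (fun t => p (a :: t)) l).
Proof. induction l; simpl; auto. destruct (p (a :: a0)); simpl; rewrite IHl; auto. Qed.

Lemma flat_map_ext_in {A B} (f g : A -> list B) l :
  (forall x, In x l -> f x = g x) -> flat_map f l = flat_map g l.
Proof. induction l; simpl; intros; auto. rewrite H, IHl; auto. Qed.

Lemma filter_false_l {A} (l : list A) : filter (fun _ => false) l = [].
Proof. induction l; auto. Qed.
Lemma filter_true_l {A} (l : list A) : filter (fun _ => true) l = l.
Proof. induction l; simpl; f_equal; auto. Qed.

Lemma filter_headle_gen : forall k a n, (a <= n)%nat ->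
  filter (headle a) (gen n k) = gen a k.
Proof.
  destruct k as [|k]; intros a n Han; simpl; auto.
  rewrite filter_flat_map.
  replace n with (a + (n - a))%nat by lia. rewrite seq_app, flat_map_app.
  rewrite (flat_map_ext_in _ (fun x => nil) (seq (1 + a) _)).
  2:{ intros x Hx. apply in_seq in Hx. rewrite filter_map_cons.
      simpl. rewrite (filter_ext _ (fun _ => false)). rewrite filter_false_l; auto.
      intros; apply Nat.leb_gt; lia. }
  rewrite (flat_map_ext_in _ (fun x => map (cons x) (gen x k)) (seq 1 a)).
  2:{ intros x Hx. apply in_seq in Hx. rewrite filter_map_cons.
      simpl. rewrite (filter_ext _ (fun _ => true)). rewrite filter_true_l; auto.
      intros; apply Nat.leb_le; lia. }
  clear. generalize (seq 1 a) (seq (1+a) (n-a)). intros l1 l2. induction l2; simpl; auto. rewrite app_nil_r; auto.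
Qed.

Lemma filter_andb {A} (p q : A -> bool) l :
  filter (fun t => p t && q t) l = filter p (filter q l).
Proof. induction l; simpl; auto. destruct (q a) eqn:E1, (p a) eqn:E2; simpl; rewrite ?E1, ?E2, IHl; auto. Qed.

Lemma nonincb_cons a t : nonincb (a :: t) = headle a t && nonincb t.
Proof. destruct t; simpl; auto. Qed.

Lemma adm_gen : forall k n, adm n k = gen n k.
Proof.
  unfold adm. induction k; intros n; simpl; auto.
  rewrite filter_flat_map. apply flat_map_ext_in. intros a Ha. apply in_seq in Ha.
  rewrite filter_map_cons.
  rewrite (filter_ext _ (fun t => headle a t && nonincb t)) by (intros; apply nonincb_cons).
  rewrite filter_andb, IHk, filter_headle_gen by lia. auto.
Qed.

Lemma gen_S n k : gen (S n) (S k) = gen n (S k) ++ map (cons (S n)) (gen (S n) k).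
Proof.
  change (gen (S n) (S k)) with (flat_map (fun a => map (cons a) (gen a k)) (seq 1 (S n))).
  rewrite seq_S, flat_map_app. simpl. rewrite app_nil_r. auto.
Qed.

Lemma gen_0 k : gen 0 (S k) = [].
Proof. reflexivity. Qed.

Definition cnt (P : list nat -> bool) n k := length (filter P (gen n k)).
Definition NN n k := length (gen n k).

Lemma cnt_S P n k : cnt P (S n) (S k) = (cnt P n (S k) + cnt (fun t => P (S n :: t)) (S n) k)%nat.
Proof. unfold cnt. rewrite gen_S, filter_app, length_app, filter_map_cons, length_map. auto. Qed.

Lemma NN_S n k : NN (S n) (S k) = (NN n (S k) + NN (S n) k)%nat.
Proof. unfold NN. rewrite gen_S, length_app, length_map. auto. Qed.
Lemma NN_0 n : NN n 0 = 1%nat. Proof. reflexivity. Qed.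
Lemma NN_0S k : NN 0 (S k) = 0%nat. Proof. reflexivity. Qed.

Lemma cnt_true n k : cnt (fun _ => true) n k = NN n k.
Proof. unfold cnt, NN. rewrite filter_true_l. auto. Qed.

Fixpoint occ (i : nat) (l : list nat) : nat :=
  match l with [] => O | a :: t => ((if Nat.eqb a i then 1 else 0) + occ i t)%nat end.

Lemma cnt_ext P Q n k : (forall l, P l = Q l) -> cnt P n k = cnt Q n k.
Proof. intros H; unfold cnt; rewrite (filter_ext _ _ H); auto. Qed.

Lemma cnt_occ (i : nat) : (1 <= i)%nat -> forall n k j,
  cnt (fun l => Nat.leb j (occ i l)) n k =
  if Nat.leb i n then (if Nat.leb j k then NN n (k - j) else 0%nat)
  else (if Nat.eqb j 0 then NN n k else 0%nat).
Proof.
  intros Hi. induction n as [|n IHn].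
  - intros [|k] j; rewrite (proj2 (Nat.leb_gt i 0)) by lia.
    + unfold cnt; simpl. destruct j; simpl; auto.
    + unfold cnt; simpl. destruct j; auto.
  - induction k as [|k IHk]; intros j.
    + unfold cnt; simpl. destruct j; simpl; destruct (Nat.leb i (S n)); auto.
    + rewrite cnt_S, IHn.
      destruct (Nat.eq_dec (S n) i) as [E|E].
      * subst i. rewrite Nat.leb_refl. replace (Nat.leb (S n) n) with false by (symmetry; apply Nat.leb_gt; lia).
        destruct j as [|j].
        -- simpl. rewrite cnt_true, NN_S. auto.
        -- simpl (Nat.eqb (S j) 0). 
           rewrite (cnt_ext _ (fun l => Nat.leb j (occ (S n) l))).
           2:{ intros l. simpl. rewrite Nat.eqb_refl. simpl. auto. }
           rewrite IHk, Nat.leb_refl. simpl. auto.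
      * rewrite (cnt_ext _ (fun l => Nat.leb j (occ i l))).
        2:{ intros l. change (Nat.leb j ((if Nat.eqb (S n) i then 1 else 0) + occ i l)%nat = Nat.leb j (occ i l)). destruct (Nat.eqb_spec (S n) i); [lia|]. simpl. reflexivity. }
        rewrite IHk.
        destruct (Nat.leb i n) eqn:E1.
        -- apply Nat.leb_le in E1. rewrite (proj2 (Nat.leb_le i (S n))) by lia.
           destruct (Nat.leb j (S k)) eqn:E2; destruct (Nat.leb j k) eqn:E3;
             try apply Nat.leb_le in E2; try apply Nat.leb_le in E3;
             try apply Nat.leb_gt in E2; try apply Nat.leb_gt in E3; try lia.
           ++ replace (S k - j)%nat with (S (k - j)) by lia. rewrite NN_S. auto.
           ++ replace j with (S k) by lia. rewrite Nat.sub_diag, !NN_0. auto.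
        -- apply Nat.leb_gt in E1. rewrite (proj2 (Nat.leb_gt i (S n))) by lia.
           destruct j; simpl; auto. rewrite NN_S; auto.
Qed.

Lemma occ_zero i : forall t b, nonincb (b :: t) = true -> (b < i)%nat -> occ i (b :: t) = 0%nat.
Proof.
  induction t as [|c t IH]; intros b H Hb.
  - simpl. destruct (Nat.eqb_spec b i); [lia|]. auto.
  - simpl in H. apply andb_prop in H as [H1 H2]. apply Nat.leb_le in H1.
    change (((if Nat.eqb b i then 1 else 0) + occ i (c :: t))%nat = 0%nat).
    rewrite IH by (auto; lia). destruct (Nat.eqb_spec b i); [lia|]. auto.
Qed.

Lemma sigma_occ i : forall l, nonincb l = true -> Defs.sigma i l = pred (occ i l).
Proof.
  induction l as [|a t IH]; intros H; auto.
  destruct t as [|b t].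
  - simpl. destruct (Nat.eqb a i); auto.
  - change (Defs.sigma i (a :: b :: t)) with
      (((if andb (Nat.eqb a i) (Nat.eqb b i) then 1 else 0) + Defs.sigma i (b :: t))%nat).
    change (occ i (a :: b :: t)) with (((if Nat.eqb a i then 1 else 0) + occ i (b :: t))%nat).
    simpl in H. apply andb_prop in H as [H1 H2]. apply Nat.leb_le in H1.
    rewrite IH by auto.
    destruct (Nat.eqb_spec a i), (Nat.eqb_spec b i); simpl; try lia.
    + change (occ i (b :: t)) with (((if Nat.eqb b i then 1 else 0) + occ i t)%nat).
      destruct (Nat.eqb_spec b i); [|lia]. simpl. lia.
    + pose proof (occ_zero i t b H2 ltac:(lia)) as Z. simpl in Z. rewrite Z. auto.
Qed.

Lemma in_adm_noninc n k l : In l (adm n k) -> nonincb l = true.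
Proof. unfold adm. intros H. apply filter_In in H. tauto. Qed.

Lemma NN_pos n k : (1 <= n)%nat -> (1 <= NN n k)%nat.
Proof.
  intros Hn. destruct n as [|n]; [lia|]. induction k; auto.
  rewrite NN_S. lia.
Qed.

Lemma NN_1 k : NN 1 k = 1%nat.
Proof. induction k; auto. rewrite NN_S, NN_0S. auto. Qed.

Lemma NN_n1 n : NN n 1 = n.
Proof. induction n; auto. rewrite NN_S, IHn, NN_0. lia. Qed.

Lemma NN_B : forall n k, (1 <= n)%nat -> (S k * NN n (S k) = (n + k) * NN n k)%nat.
Proof.
  intros n k Hn. destruct n as [|m]; [lia|]. clear Hn. revert k.
  induction m as [|m IHm]; intros.
  - rewrite !NN_1. lia.
  - induction k as [|k IHk].
    + rewrite NN_n1, NN_0. lia.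
    + pose proof (NN_S (S m) (S k)). pose proof (IHm (S k)). pose proof (NN_S (S m) k).
      rewrite NN_S. nia.
Qed.

Lemma NN_C : forall n k, (1 <= n)%nat -> (n * NN (S n) k = (n + k) * NN n k)%nat.
Proof.
  intros n k Hn. induction k as [|k IHk].
  - rewrite !NN_0. lia.
  - rewrite NN_S. pose proof (NN_B n k Hn). nia.
Qed.

Definition pr (n k j : nat) : R :=
  if Nat.leb j k then INR (NN n (k - j)) / INR (NN n k) else 0.

Lemma cdf_formula n k i (g : nat -> R) x t : (1 <= i <= n)%nat ->
  (forall s, g s <= x <-> (s <= t)%nat) -> cdfS n k i g x = 1 - pr n k (t + 2).
Proof.
  intros Hi Hg. unfold cdfS.
  rewrite (filter_ext_in _ (fun l => negb (Nat.leb (t+2) (occ i l)))).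
  2:{ intros l Hl. rewrite (sigma_occ i l (in_adm_noninc _ _ _ Hl)).
      destruct (Rle_dec _ _) as [H|H].
      - apply Hg in H. symmetry. apply negb_true_iff, Nat.leb_gt. lia.
      - symmetry. apply negb_false_iff, Nat.leb_le.
        destruct (Nat.le_gt_cases (occ i l) (t+1)); [|lia]. exfalso; apply H, Hg. lia. }
  pose proof (filter_length (fun l => Nat.leb (t+2) (occ i l)) (adm n k)) as HL.
  rewrite adm_gen in *.
  fold (cnt (fun l => Nat.leb (t+2) (occ i l)) n k) in HL.
  rewrite cnt_occ in HL by lia.
  rewrite (proj2 (Nat.leb_le i n)) in HL by lia. fold (NN n k) in HL |- *.
  pose proof (NN_pos n k ltac:(lia)).
  assert (HN : INR (NN n k) <> 0) by (apply not_0_INR; lia).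
  unfold pr. destruct (Nat.leb (t+2) k).
  - replace (length (filter _ (gen n k))) with (NN n k - NN n (k - (t+2)))%nat by lia.
    rewrite minus_INR by lia. field. auto.
  - replace (length (filter _ (gen n k))) with (NN n k) by lia. field. auto.
Qed.

Lemma cdf_zero n k i (g : nat -> R) x : (forall s, x < g s) -> cdfS n k i g x = 0.
Proof.
  intros H. unfold cdfS. rewrite (filter_ext _ (fun _ => false)).
  - rewrite filter_false_l. simpl. unfold Rdiv. ring.
  - intros l. destruct (Rle_dec _ _); auto. specialize (H (Defs.sigma i l)). lra.
Qed.

Lemma div_le a b c d : 0 < b -> 0 < d -> a * d <= c * b -> a / b <= c / d.
Proof.
  intros Hb Hd H.
  assert (E : c / d - a / b = (c * b - a * d) / (b * d)) by (field; lra).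
  assert (0 <= (c * b - a * d) / (b * d)).
  { apply Rmult_le_pos; [lra|]. apply Rlt_le, Rinv_0_lt_compat. nra. }
  lra.
Qed.

Lemma pr_0 n k : (1 <= n)%nat -> pr n k 0 = 1.
Proof.
  intros Hn. unfold pr. simpl. rewrite Nat.sub_0_r. field.
  apply not_0_INR. pose proof (NN_pos n k Hn). lia.
Qed.

Lemma pr_nonneg n k j : 0 <= pr n k j.
Proof.
  unfold pr. destruct (Nat.leb j k); [|lra].
  apply Rmult_le_pos; [apply pos_INR|]. destruct (NN n k) eqn:E.
  - simpl. rewrite Rinv_0. lra.
  - apply Rlt_le, Rinv_0_lt_compat, lt_0_INR; lia.
Qed.

Lemma pr_step n k j : (2 <= n)%nat -> (j < k)%nat ->
  pr n k (S j) = pr n k j * ((INR k - INR j) / (INR n + INR k - INR j - 1)).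
Proof.
  intros Hn Hjk. unfold pr.
  rewrite (proj2 (Nat.leb_le (S j) k)) by lia. rewrite (proj2 (Nat.leb_le j k)) by lia.
  pose proof (NN_B n (k - S j) ltac:(lia)) as HB.
  replace (S (k - S j)) with (k - j)%nat in HB by lia.
  replace (n + (k - S j))%nat with (n + k - j - 1)%nat in HB by lia.
  apply (f_equal INR) in HB. rewrite !mult_INR in HB.
  rewrite minus_INR in HB by lia.
  replace (INR (n + k - j - 1)) with (INR n + INR k - INR j - 1) in HB.
  2:{ rewrite !minus_INR, plus_INR by lia. simpl. lra. }
  pose proof (NN_pos n k ltac:(lia)).
  assert (HN : INR (NN n k) <> 0) by (apply not_0_INR; lia).
  assert (Hd : INR n + INR k - INR j - 1 <> 0).
  { apply lt_INR in Hjk. assert (2 <= INR n) by (apply (le_INR 2); lia). lra. }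
  apply (Rmult_eq_reg_r (INR n + INR k - INR j - 1)); auto.
  transitivity ((INR n + INR k - INR j - 1) * INR (NN n (k - S j)) / INR (NN n k)); [field; auto|]. rewrite <- HB. field. split; auto.
Qed.

Definition alph n k := (INR n - 1) / (INR n + INR k - 1).
Definition bet n k j := (INR n - 1) / (INR n + INR k - INR j).

Lemma pr_upper n k j : (2 <= n)%nat -> pr n k j <= (1 - alph n k) ^ j.
Proof.
  intros Hn. assert (2 <= INR n) by (apply (le_INR 2); lia).
  pose proof (pos_INR k).
  assert (HA : 0 <= 1 - alph n k <= 1).
  { unfold alph. split.
    - assert ((INR n - 1) / (INR n + INR k - 1) <= 1 / 1).
      { apply div_le; lra. } lra.
    - assert (0 <= (INR n - 1) / (INR n + INR k - 1)).
      { apply Rmult_le_pos; [lra|]. apply Rlt_le, Rinv_0_lt_compat; lra. } lra. }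
  induction j as [|j IH].
  - rewrite pr_0 by lia. simpl; lra.
  - destruct (Nat.lt_ge_cases j k) as [Hjk|Hjk].
    + rewrite pr_step by auto. simpl. rewrite Rmult_comm.
      apply Rmult_le_compat; auto using pr_nonneg.
      * apply lt_INR in Hjk. apply Rmult_le_pos; [lra|].
        apply Rlt_le, Rinv_0_lt_compat; lra.
      * apply le_INR in Hjk as Hj'. apply lt_INR in Hjk. pose proof (pos_INR j).
        unfold alph. replace (1 - (INR n - 1) / (INR n + INR k - 1)) with
          (INR k / (INR n + INR k - 1)) by (field; lra).
        apply div_le; try lra. nra.
    + unfold pr. rewrite (proj2 (Nat.leb_gt (S j) k)) by lia.
      apply pow_le; lra.
Qed.

Lemma pr_lower n k j : (2 <= n)%nat -> (j <= k)%nat -> (1 - bet n k j) ^ j <= pr n k j.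
Proof.
  intros Hn. assert (2 <= INR n) by (apply (le_INR 2); lia).
  pose proof (pos_INR k).
  induction j as [|j IH]; intros Hjk.
  - rewrite pr_0 by lia. simpl; lra.
  - rewrite pr_step by lia. apply le_INR in Hjk. rewrite S_INR in Hjk.
    pose proof (pos_INR j).
    assert (E : 1 - bet n k (S j) = (INR k - INR j) / (INR n + INR k - INR j - 1)).
    { unfold bet. rewrite S_INR. field. lra. }
    assert (Hz : 0 <= 1 - bet n k (S j)).
    { rewrite E. apply Rmult_le_pos; [lra|]. apply Rlt_le, Rinv_0_lt_compat; lra. }
    assert (Hy : 1 - bet n k (S j) <= 1 - bet n k j).
    { unfold bet. rewrite S_INR.
      assert ((INR n - 1) / (INR n + INR k - INR j) <= (INR n - 1) / (INR n + INR k - (INR j + 1))).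
      { apply div_le; lra. } lra. }
    simpl. rewrite <- E. rewrite Rmult_comm.
    apply Rmult_le_compat_r; auto.
    eapply Rle_trans; [apply pow_incr; split; eauto|]. apply IH. apply INR_le. lra.
Qed.
From Coquelicot Require Import Coquelicot.
Open Scope R_scope.

Lemma ev_lt (u : nat -> R) (l b : R) : is_lim_seq u l -> l < b -> eventually (fun m => u m < b).
Proof.
  intros H Hb. apply is_lim_seq_spec in H.
  assert (He : 0 < b - l) by lra. destruct (H (mkposreal _ He)) as [N HN].
  exists N. intros m Hm. specialize (HN m Hm). simpl in HN.
  apply Rabs_def2 in HN. lra.
Qed.

Lemma ev_gt (u : nat -> R) (l b : R) : is_lim_seq u l -> b < l -> eventually (fun m => b < u m).
Proof.
  intros H Hb. apply is_lim_seq_spec in H.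
  assert (He : 0 < l - b) by lra. destruct (H (mkposreal _ He)) as [N HN].
  exists N. intros m Hm. specialize (HN m Hm). simpl in HN.
  apply Rabs_def2 in HN. lra.
Qed.

Lemma ev_inf (u : nat -> R) (b : R) : is_lim_seq u p_infty -> eventually (fun m => b < u m).
Proof. intros H. apply is_lim_seq_spec in H. apply H. Qed.

Lemma ev_and (P Q : nat -> Prop) : eventually P -> eventually Q -> eventually (fun m => P m /\ Q m).
Proof.
  intros [N1 H1] [N2 H2]. exists (max N1 N2). intros m Hm. split; [apply H1|apply H2]; lia.
Qed.

Lemma ev_imp (P Q : nat -> Prop) : (forall m, P m -> Q m) -> eventually P -> eventually Q.
Proof. intros H [N HN]. exists N. auto. Qed.

Lemma ev_all (P : nat -> Prop) : (forall m, P m) -> eventually P.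
Proof. intros H. exists O. auto. Qed.

Lemma lim_inv0 (u : nat -> R) : is_lim_seq u p_infty -> is_lim_seq (fun m => / u m) 0.
Proof.
  intros H. apply (is_lim_seq_inv _ _ H). discriminate.
Qed.

Lemma lim_pow (u : nat -> R) (l : R) J : is_lim_seq u l -> is_lim_seq (fun m => u m ^ J) (l ^ J).
Proof.
  intros H. induction J.
  - apply (is_lim_seq_const 1).
  - apply (is_lim_seq_mult' u (fun m => u m ^ J) l (l ^ J)); [exact H|exact IHJ].
Qed.

Lemma lim_opp (u : nat -> R) (l : R) : is_lim_seq u l -> is_lim_seq (fun m => - u m) (- l).
Proof. intros H. apply (is_lim_seq_opp u l) in H. exact H. Qed.

Lemma lim_eq (u : nat -> R) (l1 l2 : R) : is_lim_seq u l1 -> l1 = l2 -> is_lim_seq u l2.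
Proof. intros H E; subst; auto. Qed.

Lemma exp_pow a j : exp a ^ j = exp (INR j * a).
Proof.
  induction j. simpl. rewrite Rmult_0_l, exp_0. auto.
  simpl pow. rewrite IHj, S_INR, <- exp_plus. f_equal. ring.
Qed.

Lemma cont_exp x : continuity_pt exp x.
Proof. apply derivable_continuous_pt, derivable_pt_exp. Qed.

Lemma lim_E (a : nat -> R) (j : nat -> nat) (x : R) :
  is_lim_seq a 0 -> is_lim_seq (fun m => INR (j m) * a m) x ->
  is_lim_seq (fun m => (1 - a m) ^ (j m)) (exp (- x)).
Proof.
  intros Ha Hja.
  apply is_lim_seq_le_le_loc with
    (u := fun m => exp (- (INR (j m) * a m / (1 - a m))))
    (w := fun m => exp (- (INR (j m) * a m))).
  - apply (ev_imp (fun m => a m < 1)); [|apply (ev_lt _ 0); auto; lra].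
    intros m Hm. pose proof (pos_INR (j m)). split.
    + replace (- (INR (j m) * a m / (1 - a m))) with (INR (j m) * (- (a m / (1 - a m))))
        by (field; lra).
      rewrite <- exp_pow. apply pow_incr. split; [left; apply exp_pos|].
      pose proof (exp_ineq1_le (a m / (1 - a m))).
      rewrite exp_Ropp. 
      replace (1 - a m) with (/ (1 + a m / (1 - a m))) at 2 by (field; lra).
      apply Rinv_le_contravar; auto.
      replace (1 + a m / (1 - a m)) with (/ (1 - a m)) by (field; lra).
      apply Rinv_0_lt_compat; lra.
    + replace (- (INR (j m) * a m)) with (INR (j m) * (- a m)) by ring.
      rewrite <- exp_pow. apply pow_incr. split; [lra|].
      pose proof (exp_ineq1_le (- a m)). lra.
  - apply is_lim_seq_continuous; [apply cont_exp|].
    replace (- x) with (- (x / (1 - 0))) by (field).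
    apply lim_opp.
    apply is_lim_seq_div'; auto. apply is_lim_seq_minus'; auto. apply is_lim_seq_const. lra.
  - apply is_lim_seq_continuous; [apply cont_exp|].
    apply lim_opp. auto.
Qed.

Definition flo (y : R) : nat := Z.to_nat (Int_part y).

Lemma flo_spec y : 0 <= y -> INR (flo y) <= y < INR (flo y) + 1.
Proof.
  intros Hy. destruct (base_Int_part y) as [H1 H2].
  assert (Hz : (0 <= Int_part y)%Z).
  { apply le_IZR. assert (-1 < IZR (Int_part y)) by lra.
    apply lt_IZR in H. apply IZR_le. lia. }
  unfold flo. rewrite INR_IZR_INZ, Z2Nat.id by auto. lra.
Qed.

Lemma flo_iff y : 0 <= y -> forall s, INR s <= y <-> (s <= flo y)%nat.
Proof.
  intros Hy s. pose proof (flo_spec y Hy). split; intros H'.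
  - assert (INR s < INR (flo y + 1)) by (rewrite plus_INR; simpl; lra).
    apply INR_lt in H0. lia.
  - apply le_INR in H'. lra.
Qed.

Lemma lim_invk : is_lim_seq (fun k => / INR k) 0.
Proof. apply lim_inv0, is_lim_seq_INR. Qed.

Lemma ratio_lim n (mm : nat -> nat) (y : R) : (1 <= n)%nat ->
  is_lim_seq (fun k => INR (mm k) / INR k) y ->
  is_lim_seq (fun k => INR (NN n (mm k)) / INR (NN n k)) (y ^ (n - 1)).
Proof.
  intros Hn Hy. destruct n as [|n1]; [lia|]. clear Hn.
  induction n1 as [|n1 IH].
  - simpl. apply (is_lim_seq_ext (fun _ => 1)). intros k. rewrite !NN_1. simpl. field.
    apply (is_lim_seq_const 1).
  - replace (S (S n1) - 1)%nat with (S (S n1 - 1)) by lia. simpl pow.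
    apply (is_lim_seq_ext_loc (fun k => (INR (NN (S n1) (mm k)) / INR (NN (S n1) k)) *
        ((INR (S n1) * / INR k + INR (mm k) / INR k) / (INR (S n1) * / INR k + 1)))).
    + exists 1%nat. intros k Hk.
      pose proof (NN_C (S n1) (mm k) ltac:(lia)) as C1.
      pose proof (NN_C (S n1) k ltac:(lia)) as C2.
      apply (f_equal INR) in C1, C2. rewrite !mult_INR, !plus_INR in C1, C2.
      pose proof (NN_pos (S n1) k ltac:(lia)). pose proof (NN_pos (S (S n1)) k ltac:(lia)).
      pose proof (NN_pos (S n1) (mm k) ltac:(lia)).
      assert (INR (NN (S n1) k) <> 0) by (apply not_0_INR; lia).
      assert (INR (NN (S (S n1)) k) <> 0) by (apply not_0_INR; lia).
      assert (0 < INR k) by (apply lt_0_INR; lia).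
      assert (0 < INR (S n1)) by (apply lt_0_INR; lia).
      pose proof (pos_INR (mm k)).
      apply (Rmult_eq_reg_r (INR (NN (S (S n1)) k) * INR (S n1))); [|apply Rmult_integral_contrapositive; split; lra].
      transitivity (INR (NN (S n1) (mm k)) * (INR (S n1) + INR (mm k)) * INR (NN (S (S n1)) k) * INR (S n1) / (INR (NN (S n1) k) * (INR (S n1) + INR k))).
      { field. repeat split; lra. }
      replace (INR (NN (S n1) (mm k)) * (INR (S n1) + INR (mm k))) with (INR (S n1) * INR (NN (S (S n1)) (mm k))) by lra.
      replace (INR (NN (S n1) k) * (INR (S n1) + INR k)) with (INR (S n1) * INR (NN (S (S n1)) k)) by lra. field. split; lra.
    + eapply lim_eq; [apply (is_lim_seq_mult' _ _ (y ^ (S n1 - 1)) ((INR (S n1) * 0 + y) / (INR (S n1) * 0 + 1))); auto|replace (n1 - 0)%nat with (S n1 - 1)%nat by lia; set (z := y ^ (S n1 - 1)); field].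
      apply is_lim_seq_div'.
      * apply is_lim_seq_plus'; auto. apply is_lim_seq_mult'; [apply is_lim_seq_const|apply lim_invk].
      * apply is_lim_seq_plus'; [|apply is_lim_seq_const]. apply is_lim_seq_mult'; [apply is_lim_seq_const|apply lim_invk].
      * lra.
Qed.

Lemma lim_J (r : nat -> R) (x : R) : 0 <= x -> is_lim_seq r p_infty ->
  is_lim_seq (fun m => INR (flo (x * r m) + 2) / r m) x.
Proof.
  intros Hx Hr.
  apply is_lim_seq_le_le_loc with (u := fun m => x + / r m) (w := fun m => x + 2 * / r m).
  - apply (ev_imp (fun m => 0 < r m)); [|apply ev_inf; auto].
    intros m Hm. assert (0 <= x * r m) by (apply Rmult_le_pos; lra).
    pose proof (flo_spec _ H). rewrite plus_INR. simpl (INR 2).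
    replace (x + / r m) with ((x * r m + 1) / r m) by (field; lra).
    replace (x + 2 * / r m) with ((x * r m + 2) / r m) by (field; lra).
    split; unfold Rdiv; apply Rmult_le_compat_r; try (apply Rlt_le, Rinv_0_lt_compat; lra); lra.
  - eapply lim_eq; [apply is_lim_seq_plus'; [apply is_lim_seq_const|apply lim_inv0; auto]|ring].
  - eapply lim_eq; [apply is_lim_seq_plus'; [apply is_lim_seq_const|apply is_lim_seq_mult'; [apply is_lim_seq_const|apply lim_inv0; auto]]|ring].
Qed.

Lemma case1 n i x : (2 <= n)%nat -> (1 <= i <= n)%nat ->
  Un_cv (fun k => cdfS n k i (fun s => INR s / INR k) x) (beta1_cdf n x).
Proof.
  intros Hn Hi. apply is_lim_seq_Reals. unfold beta1_cdf.
  destruct (Rlt_dec x 0) as [Hx|Hx].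
  - apply (is_lim_seq_ext_loc (fun _ => 0)); [|apply is_lim_seq_const].
    exists 1%nat. intros k Hk. symmetry. apply cdf_zero. intros s.
    assert (0 < INR k) by (apply lt_0_INR; lia).
    assert (0 <= INR s / INR k) by (apply Rmult_le_pos; [apply pos_INR|apply Rlt_le, Rinv_0_lt_compat; auto]).
    lra.
  - apply Rnot_lt_le in Hx.
    pose (J := fun k => (flo (x * INR k) + 2)%nat).
    assert (Hc : eventually (fun k => cdfS n k i (fun s => INR s / INR k) x = 1 - pr n k (J k))).
    { exists 1%nat. intros k Hk. apply cdf_formula; auto.
      assert (0 < INR k) by (apply lt_0_INR; lia).
      intros s. rewrite <- flo_iff by (apply Rmult_le_pos; lra).
      split; intros H'.
      - apply (Rmult_le_compat_r (INR k)) in H'; [|lra]. unfold Rdiv in H'.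
        rewrite Rmult_assoc, Rinv_l, Rmult_1_r in H'; lra.
      - apply (Rmult_le_reg_r (INR k)); auto. unfold Rdiv. rewrite Rmult_assoc, Rinv_l, Rmult_1_r; lra. }
    pose proof (lim_J INR x Hx is_lim_seq_INR) as HJ. fold J in HJ.
    destruct (Rle_dec x 1) as [Hx1|Hx1]; [destruct (Rle_lt_or_eq _ _ Hx1) as [Hlt|Heq]|].
    +
      assert (HJk : eventually (fun k => (J k < k)%nat /\ (1 <= k)%nat)).
      { apply (ev_imp (fun k => INR (J k) / INR k < 1 /\ (1 <= k)%nat)).
        - intros k [H1 H2]. split; auto.
          assert (0 < INR k) by (apply lt_0_INR; lia).
          apply INR_lt. apply (Rmult_lt_compat_r (INR k)) in H1; auto.
          unfold Rdiv in H1. rewrite Rmult_assoc, Rinv_l, Rmult_1_r in H1; lra.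
        - apply ev_and; [apply (ev_lt _ x); auto|exists 1%nat; auto]. }
      assert (Hm : is_lim_seq (fun k => INR (k - J k) / INR k) (1 - x)).
      { apply (is_lim_seq_ext_loc (fun k => 1 - INR (J k) / INR k)).
        - apply (ev_imp _ _ (fun k H => H)) in HJk. revert HJk. apply ev_imp.
          intros k [H1 H2]. rewrite minus_INR by lia.
          assert (0 < INR k) by (apply lt_0_INR; lia). field. lra.
        - apply is_lim_seq_minus'; auto. apply is_lim_seq_const. }
      pose proof (ratio_lim n (fun k => (k - J k)%nat) (1 - x) ltac:(lia) Hm) as HR.
      apply (is_lim_seq_ext_loc (fun k => 1 - INR (NN n (k - J k)) / INR (NN n k))).
      * generalize (ev_and _ _ HJk Hc). apply ev_imp. intros k [[H1 H2] H3]. rewrite H3.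
        unfold pr. rewrite (proj2 (Nat.leb_le _ _)) by lia. auto.
      * apply is_lim_seq_minus'; auto. apply is_lim_seq_const.
    + assert (H1 : eventually (fun k => cdfS n k i (fun s => INR s / INR k) x = 1)).
      { generalize (ev_and _ _ Hc (ev_all (fun k => True) (fun _ => I))). apply ev_imp.
        intros k [H3 _]. rewrite H3. unfold pr.
        destruct (Nat.leb_spec (J k) k) as [Hle|Hgt]; [|lra]. exfalso.
        assert (0 <= x * INR k) by (apply Rmult_le_pos; [lra|apply pos_INR]).
        pose proof (flo_spec _ H). subst x.
        unfold J in Hle. apply le_INR in Hle. rewrite plus_INR in Hle. simpl in Hle. lra. }
      apply (is_lim_seq_ext_loc (fun _ => 1)).
      * revert H1. apply ev_imp. auto.
      * subst x. replace (1 - (1 - 1) ^ (n - 1)) with 1. apply is_lim_seq_const.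
        rewrite Rminus_diag, pow_i by lia. ring.
    + assert (H1 : eventually (fun k => cdfS n k i (fun s => INR s / INR k) x = 1)).
      { generalize (ev_and _ _ Hc (ev_all (fun k => True) (fun _ => I))). apply ev_imp.
        intros k [H3 _]. rewrite H3. unfold pr.
        destruct (Nat.leb_spec (J k) k) as [Hle|Hgt]; [|lra]. exfalso.
        assert (0 <= x * INR k) by (apply Rmult_le_pos; [lra|apply pos_INR]).
        pose proof (flo_spec _ H). pose proof (pos_INR k).
        assert (x * INR k >= INR k) by nra.
        unfold J in Hle. apply le_INR in Hle. rewrite plus_INR in Hle. simpl in Hle. lra. }
      apply (is_lim_seq_ext_loc (fun _ => 1)).
      * revert H1. apply ev_imp. auto.
      * apply is_lim_seq_const.
Qed.

Lemma alph_eq n k : (2 <= n)%nat -> alph n k = (1 - / INR n) / (1 + INR k / INR n - / INR n).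
Proof.
  intros Hn. unfold alph. assert (2 <= INR n) by (apply (le_INR 2); auto).
  pose proof (pos_INR k).
  assert (E : 1 + INR k / INR n - / INR n = (INR n + INR k - 1) / INR n) by (field; lra).
  rewrite E. field. split; apply Rgt_not_eq; lra.
Qed.

Lemma bet_eq n k J : (1 <= n)%nat -> (J <= k)%nat ->
  bet n k J = (1 - / INR n) / (1 + INR k / INR n - INR J / INR n).
Proof.
  intros Hn HJ. unfold bet. assert (1 <= INR n) by (apply (le_INR 1); auto).
  apply le_INR in HJ.
  assert (E : 1 + INR k / INR n - INR J / INR n = (INR n + INR k - INR J) / INR n) by (field; lra).
  rewrite E. field. split; apply Rgt_not_eq; lra.
Qed.

Section Seqs.
Variables (ns ks : nat -> nat).
Hypothesis Hn2 : forall m, (2 <= ns m)%nat.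
Hypothesis Hninf : is_lim_seq (fun m => INR (ns m)) p_infty.

Lemma lim_u : is_lim_seq (fun m => / INR (ns m)) 0.
Proof. apply lim_inv0; auto. Qed.

Lemma lim_alph (l : R) : 1 + l <> 0 ->
  is_lim_seq (fun m => INR (ks m) / INR (ns m)) l ->
  is_lim_seq (fun m => alph (ns m) (ks m)) (1 / (1 + l)).
Proof.
  intros Hl Hr. apply (is_lim_seq_ext (fun m => (1 - / INR (ns m)) / (1 + INR (ks m) / INR (ns m) - / INR (ns m)))).
  { intros m. rewrite alph_eq; auto. }
  eapply lim_eq; [apply (is_lim_seq_div' _ _ (1 - 0) (1 + l - 0))|field; auto].
  - apply is_lim_seq_minus'; [apply is_lim_seq_const|apply lim_u].
  - apply is_lim_seq_minus'; [apply is_lim_seq_plus'; [apply is_lim_seq_const|auto]|apply lim_u].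
  - lra.
Qed.

Lemma lim_bet (l : R) J : 1 + l <> 0 -> is_lim_seq (fun m => INR (ks m)) p_infty ->
  is_lim_seq (fun m => INR (ks m) / INR (ns m)) l ->
  is_lim_seq (fun m => bet (ns m) (ks m) J) (1 / (1 + l)).
Proof.
  intros Hl Hk Hr.
  apply (is_lim_seq_ext_loc (fun m => (1 - / INR (ns m)) / (1 + INR (ks m) / INR (ns m) - INR J * / INR (ns m)))).
  { apply (ev_imp (fun m => INR J < INR (ks m))); [|apply ev_inf; auto].
    intros m Hm. apply INR_lt in Hm. rewrite bet_eq; [|specialize (Hn2 m); lia|lia]. auto. }
  eapply lim_eq; [apply (is_lim_seq_div' _ _ (1 - 0) (1 + l - INR J * 0))|field; auto].
  - apply is_lim_seq_minus'; [apply is_lim_seq_const|apply lim_u].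
  - apply is_lim_seq_minus'; [apply is_lim_seq_plus'; [apply is_lim_seq_const|auto]|].
    apply is_lim_seq_mult'; [apply is_lim_seq_const|apply lim_u].
  - lra.
Qed.

Lemma pr_lim3 (c : R) J : 0 < c -> is_lim_seq (fun m => INR (ks m)) p_infty ->
  is_lim_seq (fun m => INR (ks m) / INR (ns m)) c ->
  is_lim_seq (fun m => pr (ns m) (ks m) J) ((c / (1 + c)) ^ J).
Proof.
  intros Hc Hk Hr.
  assert (E : c / (1 + c) = 1 - 1 / (1 + c)) by (field; lra).
  apply is_lim_seq_le_le_loc with (u := fun m => (1 - bet (ns m) (ks m) J) ^ J)
    (w := fun m => (1 - alph (ns m) (ks m)) ^ J).
  - apply (ev_imp (fun m => INR J < INR (ks m))); [|apply ev_inf; auto].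
    intros m Hm. apply INR_lt in Hm. split.
    + apply pr_lower; auto; lia.
    + apply pr_upper; auto.
  - rewrite E. apply lim_pow. apply is_lim_seq_minus'; [apply is_lim_seq_const|].
    apply lim_bet; auto; apply Rgt_not_eq; lra.
  - rewrite E. apply lim_pow. apply is_lim_seq_minus'; [apply is_lim_seq_const|].
    apply lim_alph; auto; apply Rgt_not_eq; lra.
Qed.

Lemma pr_lim4 J : (1 <= J)%nat ->
  is_lim_seq (fun m => INR (ks m) / INR (ns m)) 0 ->
  is_lim_seq (fun m => pr (ns m) (ks m) J) 0.
Proof.
  intros HJ Hr.
  apply is_lim_seq_le_le_loc with (u := fun m => 0)
    (w := fun m => (1 - alph (ns m) (ks m)) ^ J).
  - apply ev_all. intros m. split; [apply pr_nonneg|apply pr_upper; auto].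
  - apply is_lim_seq_const.
  - eapply lim_eq; [apply lim_pow|]. apply is_lim_seq_minus'; [apply is_lim_seq_const|].
    apply (lim_alph 0); [apply Rgt_not_eq; lra|apply Hr]. replace (1 - 1 / (1 + 0)) with 0 by field. apply pow_i. lia.
Qed.
End Seqs.

Lemma eq_a2 (N K Jr : R) : 2 <= N -> 0 < K ->
  Jr * ((N - 1) / (N + K - 1)) =
  (Jr / (K / N) * (1 - / N)) / (/ (K / N) + 1 - / N * / (K / N)).
Proof.
  intros HN HK.
  assert (A : Jr / (K / N) * (1 - / N) = Jr * (N - 1) / K) by (field; split; apply Rgt_not_eq; lra).
  assert (B : / (K / N) + 1 - / N * / (K / N) = (N + K - 1) / K) by (field; split; apply Rgt_not_eq; lra).
  rewrite A, B. field. split; apply Rgt_not_eq; lra.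
Qed.

Lemma eq_a1 (N K : R) : 2 <= N -> 0 < K ->
  (N - 1) / (N + K - 1) =
  (/ (K / N) - / N * / (K / N)) / (/ (K / N) + 1 - / N * / (K / N)).
Proof.
  intros HN HK.
  assert (A : / (K / N) - / N * / (K / N) = (N - 1) / K) by (field; split; apply Rgt_not_eq; lra).
  assert (B : / (K / N) + 1 - / N * / (K / N) = (N + K - 1) / K) by (field; split; apply Rgt_not_eq; lra).
  rewrite A, B. field. split; apply Rgt_not_eq; lra.
Qed.

Lemma eq_b2 (N K Jr : R) : 2 <= N -> 0 < K -> Jr < K ->
  Jr * ((N - 1) / (N + K - Jr)) =
  (Jr / (K / N) * (1 - / N)) / (/ (K / N) + 1 - Jr / (K / N) * / N).
Proof.
  intros HN HK HJ.
  assert (A : Jr / (K / N) * (1 - / N) = Jr * (N - 1) / K) by (field; split; apply Rgt_not_eq; lra).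
  assert (B : / (K / N) + 1 - Jr / (K / N) * / N = (N + K - Jr) / K) by (field; split; apply Rgt_not_eq; lra).
  rewrite A, B. field. split; apply Rgt_not_eq; lra.
Qed.

Lemma eq_b1 (N K Jr : R) : 2 <= N -> 0 < K -> Jr < K ->
  (N - 1) / (N + K - Jr) =
  (/ (K / N) - / N * / (K / N)) / (/ (K / N) + 1 - Jr / (K / N) * / N).
Proof.
  intros HN HK HJ.
  assert (A : / (K / N) - / N * / (K / N) = (N - 1) / K) by (field; split; apply Rgt_not_eq; lra).
  assert (B : / (K / N) + 1 - Jr / (K / N) * / N = (N + K - Jr) / K) by (field; split; apply Rgt_not_eq; lra).
  rewrite A, B. field. split; apply Rgt_not_eq; lra.
Qed.

Lemma pr_lim2 (ns ks : nat -> nat) (x : R) : (forall m, (2 <= ns m)%nat) -> 0 <= x ->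
  is_lim_seq (fun m => INR (ns m)) p_infty ->
  is_lim_seq (fun m => INR (ks m) / INR (ns m)) p_infty ->
  is_lim_seq (fun m => pr (ns m) (ks m) (flo (x * (INR (ks m) / INR (ns m))) + 2)) (exp (- x)).
Proof.
  intros Hn2 Hx Hn Hr.
  set (r := fun m => INR (ks m) / INR (ns m)).
  set (J := fun m => (flo (x * r m) + 2)%nat).
  set (u := fun m => / INR (ns m)).
  set (v := fun m => / r m).
  set (w := fun m => INR (J m) / r m).
  assert (Hu : is_lim_seq u 0) by (apply lim_inv0; auto).
  assert (Hv : is_lim_seq v 0) by (apply lim_inv0; auto).
  assert (Hw : is_lim_seq w x) by (apply lim_J; auto).
  assert (Hwu : is_lim_seq (fun m => w m * u m) 0).
  { eapply lim_eq; [apply is_lim_seq_mult'; eauto|ring]. }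
  assert (HN : forall m, 2 <= INR (ns m)) by (intros m; apply (le_INR 2); auto).
  assert (Hev : eventually (fun m => 0 < INR (ks m) /\ INR (J m) < INR (ks m))).
  { generalize (ev_and _ _ (ev_inf r 0 Hr) (ev_lt _ 0 1 Hwu ltac:(lra))). apply ev_imp.
    intros m [H1 H2]. unfold r in H1. specialize (HN m).
    assert (0 < INR (ks m)).
    { apply (Rmult_lt_compat_r (INR (ns m))) in H1; [|lra]. unfold Rdiv in H1.
      rewrite Rmult_assoc, Rinv_l, Rmult_1_r in H1; lra. }
    split; auto. unfold w, u, r in H2.
    replace (INR (J m) / (INR (ks m) / INR (ns m)) * / INR (ns m)) with (INR (J m) / INR (ks m)) in H2
      by (field; split; apply Rgt_not_eq; lra).
    apply (Rmult_lt_compat_r (INR (ks m))) in H2; [|lra]. unfold Rdiv in H2.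
    rewrite Rmult_assoc, Rinv_l, Rmult_1_r in H2; lra. }
  apply is_lim_seq_le_le_loc with (u := fun m => (1 - bet (ns m) (ks m) (J m)) ^ (J m))
    (w := fun m => (1 - alph (ns m) (ks m)) ^ (J m)).
  - revert Hev. apply ev_imp. intros m [H1 H2]. apply INR_lt in H2. unfold J, r in *. split.
    + apply pr_lower; auto; lia.
    + apply pr_upper; auto.
  - apply lim_E.
    + apply (is_lim_seq_ext_loc (fun m => (v m - u m * v m) / (v m + 1 - w m * u m))).
      * revert Hev. apply ev_imp. intros m [H1 H2]. unfold bet, v, u, w, r.
        rewrite eq_b1; auto.
      * eapply lim_eq; [apply (is_lim_seq_div' _ _ (0 - 0 * 0) (0 + 1 - 0))|field].
        -- apply is_lim_seq_minus'; [|apply is_lim_seq_mult']; eauto.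
        -- apply is_lim_seq_minus'; [apply is_lim_seq_plus'; [eauto|apply is_lim_seq_const]|eauto].
        -- replace (0 + 1 - 0) with 1 by ring. apply R1_neq_R0.
    + apply (is_lim_seq_ext_loc (fun m => (w m * (1 - u m)) / (v m + 1 - w m * u m))).
      * revert Hev. apply ev_imp. intros m [H1 H2]. unfold bet, v, u, w, r.
        rewrite eq_b2; auto.
      * eapply lim_eq; [apply (is_lim_seq_div' _ _ (x * (1 - 0)) (0 + 1 - 0))|field].
        -- apply is_lim_seq_mult'; [eauto|apply is_lim_seq_minus'; [apply is_lim_seq_const|eauto]].
        -- apply is_lim_seq_minus'; [apply is_lim_seq_plus'; [eauto|apply is_lim_seq_const]|eauto].
        -- replace (0 + 1 - 0) with 1 by ring. apply R1_neq_R0.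
  - apply lim_E.
    + apply (is_lim_seq_ext_loc (fun m => (v m - u m * v m) / (v m + 1 - u m * v m))).
      * revert Hev. apply ev_imp. intros m [H1 H2]. unfold alph, v, u, w, r.
        rewrite eq_a1; auto.
      * eapply lim_eq; [apply (is_lim_seq_div' _ _ (0 - 0 * 0) (0 + 1 - 0 * 0))|field].
        -- apply is_lim_seq_minus'; [|apply is_lim_seq_mult']; eauto.
        -- apply is_lim_seq_minus'; [apply is_lim_seq_plus'; [eauto|apply is_lim_seq_const]|apply is_lim_seq_mult'; eauto].
        -- replace (0 + 1 - 0 * 0) with 1 by ring. apply R1_neq_R0.
    + apply (is_lim_seq_ext_loc (fun m => (w m * (1 - u m)) / (v m + 1 - u m * v m))).
      * revert Hev. apply ev_imp. intros m [H1 H2]. unfold alph, v, u, w, r.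
        rewrite eq_a2; auto.
      * eapply lim_eq; [apply (is_lim_seq_div' _ _ (x * (1 - 0)) (0 + 1 - 0 * 0))|field].
        -- apply is_lim_seq_mult'; [eauto|apply is_lim_seq_minus'; [apply is_lim_seq_const|eauto]].
        -- apply is_lim_seq_minus'; [apply is_lim_seq_plus'; [eauto|apply is_lim_seq_const]|apply is_lim_seq_mult'; eauto].
        -- replace (0 + 1 - 0 * 0) with 1 by ring. apply R1_neq_R0.
Qed.

Lemma G_sum c : 0 < c -> forall t, sum_f_R0 (G_pmf c) t = 1 - (c / (1 + c)) ^ (t + 2).
Proof.
  intros Hc. assert (H1 : 1 + c <> 0) by (apply Rgt_not_eq; lra).
  induction t as [|t IH].
  - simpl. field. auto.
  - simpl sum_f_R0. rewrite IH. unfold G_pmf.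
    unfold Rdiv. rewrite !Rpow_mult_distr, !pow_inv.
    replace (S t + 1)%nat with (t + 2)%nat by lia.
    replace (S t + 2)%nat with (S (t + 2))%nat by lia.
    replace (t + 2)%nat with (S (t + 1)) by lia. simpl pow. set (z := c ^ (t + 1)). set (y := (1 + c) ^ (t + 1)).
    assert (y <> 0) by (apply pow_nonzero; auto). field. auto.
Qed.

Lemma cdf_INR n k i x : (1 <= i <= n)%nat -> 0 <= x ->
  cdfS n k i INR x = 1 - pr n k (flo x + 2).
Proof. intros Hi Hx. apply cdf_formula; auto. apply flo_iff; auto. Qed.

Lemma cdf_INR_neg n k i x : x < 0 -> cdfS n k i INR x = 0.
Proof. intros Hx. apply cdf_zero. intros s. pose proof (pos_INR s). lra. Qed.

Theorem mainTheorem17 :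
  (forall (n i : nat), (2 <= n)%nat -> (1 <= i <= n)%nat ->
     forall x : R,
       Un_cv (fun k => cdfS n k i (fun s => INR s / INR k) x) (beta1_cdf n x))
  /\
  (forall (ns ks is : nat -> nat),
     (forall m, (2 <= ns m)%nat /\ (1 <= is m <= ns m)%nat) ->
     cv_infty (fun m => INR (ns m)) -> cv_infty (fun m => INR (ks m)) ->
     cv_infty (fun m => INR (ks m) / INR (ns m)) ->
     forall x : R,
       Un_cv (fun m => cdfS (ns m) (ks m) (is m)
                         (fun s => INR (ns m) / INR (ks m) * INR s) x)
             (exp1_cdf x))
  /\
  (forall (ns ks is : nat -> nat) (c : R),
     (forall m, (2 <= ns m)%nat /\ (1 <= is m <= ns m)%nat) ->
     cv_infty (fun m => INR (ns m)) -> cv_infty (fun m => INR (ks m)) ->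
     0 < c -> Un_cv (fun m => INR (ks m) / INR (ns m)) c ->
     forall x : R, (forall j : nat, x <> INR j) ->
       Un_cv (fun m => cdfS (ns m) (ks m) (is m) INR x) (G_cdf c x))
  /\
  (forall (ns ks is : nat -> nat),
     (forall m, (2 <= ns m)%nat /\ (1 <= is m <= ns m)%nat) ->
     cv_infty (fun m => INR (ns m)) ->
     Un_cv (fun m => INR (ks m) / INR (ns m)) 0 ->
     forall x : R, x <> 0 ->
       Un_cv (fun m => cdfS (ns m) (ks m) (is m) INR x) (delta0_cdf x)).
Proof.
  split; [|split; [|split]].
  - intros n i Hn Hi x. apply case1; auto.
  - intros ns ks is Hall Hn Hk Hr x.
    apply is_lim_seq_p_infty_Reals in Hn, Hk, Hr.
    assert (Hn2 : forall m, (2 <= ns m)%nat) by (intros m; apply Hall).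
    apply is_lim_seq_Reals. unfold exp1_cdf.
    destruct (Rlt_dec x 0) as [Hx|Hx].
    + apply (is_lim_seq_ext_loc (fun _ => 0)); [|apply is_lim_seq_const].
      generalize (ev_inf _ 0 Hk). apply ev_imp. intros m Hm. symmetry. apply cdf_zero.
      intros s. assert (0 < INR (ns m)) by (apply lt_0_INR; specialize (Hn2 m); lia).
      assert (0 <= INR (ns m) / INR (ks m) * INR s).
      { apply Rmult_le_pos; [|apply pos_INR]. apply Rmult_le_pos; [lra|].
        apply Rlt_le, Rinv_0_lt_compat; auto. }
      lra.
    + apply Rnot_lt_le in Hx.
      apply (is_lim_seq_ext_loc (fun m => 1 - pr (ns m) (ks m) (flo (x * (INR (ks m) / INR (ns m))) + 2))).
      * generalize (ev_inf _ 0 Hk). apply ev_imp. intros m Hm. symmetry.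
        apply cdf_formula; [apply Hall|].
        assert (0 < INR (ns m)) by (apply lt_0_INR; specialize (Hn2 m); lia).
        intros s. rewrite <- flo_iff.
        2:{ apply Rmult_le_pos; auto. apply Rmult_le_pos; [lra|]. apply Rlt_le, Rinv_0_lt_compat; auto. }
        assert (E : INR s <= x * (INR (ks m) / INR (ns m)) <->
                    INR (ns m) / INR (ks m) * INR s * (INR (ks m) / INR (ns m)) <= x * (INR (ks m) / INR (ns m))).
        { replace (INR (ns m) / INR (ks m) * INR s * (INR (ks m) / INR (ns m))) with (INR s)
            by (field; split; apply Rgt_not_eq; lra). tauto. }
        rewrite E. assert (0 < INR (ks m) / INR (ns m)).
        { apply Rmult_lt_0_compat; auto. apply Rinv_0_lt_compat; auto. }
        split; intros H'.
        -- apply Rmult_le_compat_r; lra.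
        -- apply Rmult_le_reg_r in H'; auto.
      * apply is_lim_seq_minus'; [apply is_lim_seq_const|]. apply pr_lim2; auto.
  - intros ns ks is c Hall Hn Hk Hc Hr x _.
    apply is_lim_seq_p_infty_Reals in Hn, Hk. apply is_lim_seq_Reals in Hr.
    assert (Hn2 : forall m, (2 <= ns m)%nat) by (intros m; apply Hall).
    apply is_lim_seq_Reals. unfold G_cdf.
    destruct (Rlt_dec x 0) as [Hx|Hx].
    + apply (is_lim_seq_ext (fun _ => 0)); [|apply is_lim_seq_const].
      intros m. symmetry. apply cdf_INR_neg; auto.
    + apply Rnot_lt_le in Hx. change (Z.to_nat (Int_part x)) with (flo x).
      rewrite G_sum by auto.
      apply (is_lim_seq_ext (fun m => 1 - pr (ns m) (ks m) (flo x + 2))).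
      * intros m. symmetry. apply cdf_INR; auto. apply Hall.
      * apply is_lim_seq_minus'; [apply is_lim_seq_const|]. apply pr_lim3; auto.
  - intros ns ks is Hall Hn Hr x _.
    apply is_lim_seq_p_infty_Reals in Hn. apply is_lim_seq_Reals in Hr.
    assert (Hn2 : forall m, (2 <= ns m)%nat) by (intros m; apply Hall).
    apply is_lim_seq_Reals. unfold delta0_cdf.
    destruct (Rlt_dec x 0) as [Hx|Hx].
    + apply (is_lim_seq_ext (fun _ => 0)); [|apply is_lim_seq_const].
      intros m. symmetry. apply cdf_INR_neg; auto.
    + apply Rnot_lt_le in Hx.
      apply (is_lim_seq_ext (fun m => 1 - pr (ns m) (ks m) (flo x + 2))).
      * intros m. symmetry. apply cdf_INR; auto. apply Hall.
      * eapply lim_eq; [apply (is_lim_seq_minus' _ _ 1 0); [apply is_lim_seq_const|]|ring].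
        apply pr_lim4; auto. lia.
Qed.
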